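(* Let $\mathcal{A}$ be a finite abelian group. Then $$\Psi_{\mathcal{A}}(x)=\sum_{K\le\mathcal{A}}\mu(K)\left((1+x^2)^{\frac{|K|-|O_2(K)|-1}{2}}(1+x)^{|O_2(K)|}-1\right),$$ and hence $$\mathcal{E}(\mathcal{A})=\Psi_{\mathcal{A}}(1)=\sum_{K\le\mathcal{A}}\mu(K)\left(2^{\frac{|K|+|O_2(K)|-1}{2}}-1\right).$$
   Context: For a finite group $\mathcal{A}$ with identity $e$, let $G(\mathcal{A})=\{\Omega\subseteq\mathcal{A}:\Omega^{-1}=\Omega,\ \langle\Omega\rangle=\mathcal{A},\ e\notin\Omega\}$. For $k\ge1$ let $a_k(\mathcal{A})$ be the number of orbits of the inner automorphism group $\mathrm{Inn}(\mathcal{A})$ (acting by $\alpha\cdot\Omega=\alpha(\Omega)$) on $\{\Omega\in G(\mathcal{A}):|\Omega|=k\}$ (the number of equivalence classes of Cayley graphs of $\mathcal{A}$ of degree $k$); $\Psi_{\mathcal{A}}(x)=\sum_{k=1}^{|\mathcal{A}|-1}a_k(\mathcal{A})x^k$ and $\mathcal{E}(\mathcal{A})=\Psi_{\mathcal{A}}(1)$. For a subgroup $K$, $O_2(K)=\{g\in K:g^2=e,\ g\ne e\}$. The Möbius function $\mu$ on the subgroup lattice of $\mathcal{A}$ is defined recursively by $\sum_{H\ge K}\mu(H)=1$ if $K=\mathcal{A}$ and $=0$ if $K<\mathcal{A}$. *)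

(* Defs.v *)
From HB Require Import structures.
From mathcomp Require Import all_boot all_order all_algebra all_fingroup.
Set Implicit Arguments. Unset Strict Implicit. Unset Printing Implicit Defensive.
Import GRing.Theory.

Section CayleyDefs.
Variable gT : finGroupType.
Open Scope group_scope.

Definition cayley_sets (G : {set gT}) (k : nat) : {set {set gT}} :=
  [set S : {set gT} | [&& S \subset G, S^-1 == S, <<S>> == G,
                          1 \notin S & #|S| == k]].

(* a_k(A): number of orbits of Inn(A) (conjugation by elements of G)
   on the Cayley sets of degree k *)
Definition a_k (G : {group gT}) (k : nat) : nat :=
  #|[set orbit 'Js G S | S in cayley_sets G k]|.

Definition Psi (G : {group gT}) : {poly int} :=
  (\sum_(1 <= k < #|G|) (a_k G k)%:R *: 'X^k)%R.

Definition E_count (G : {group gT}) : nat :=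
  (\sum_(1 <= k < #|G|) a_k G k)%N.

Definition O2 (K : {set gT}) : {set gT} :=
  [set g in K | (g ^+ 2 == 1) && (g != 1)].

(* mu is the Moebius function of the subgroup lattice of G:
   sum_{K <= H <= G} mu H = [K = G] for every subgroup K of G. *)
Definition is_subgroup_mobius (G : {group gT}) (mu : {group gT} -> int) : Prop :=
  forall K : {group gT}, K \subset G ->
    (\sum_(H : {group gT} | (K \subset H) && (H \subset G)) mu H)%R
      = (K == G)%:R%R.

End CayleyDefs.

(* Main.v *)
Require Import Defs.
From HB Require Import structures.
From mathcomp Require Import all_boot all_order all_algebra all_fingroup.
From mathcomp Require Import zify.
Import GRing.Theory.
Local Open Scope ring_scope.

Section Aux.
Variable gT : finGroupType.
Implicit Types (A B S T : {set gT}) (x y : gT).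

Definition invc A := forall y, y \in A -> (y^-1)%g \in A.

Lemma invP S : reflect (invc S) (S^-1 == S)%g.
Proof.
apply: (iffP eqP) => [E y yS | H].
  by rewrite -E mem_invg invgK.
apply/eqP; rewrite eqEcard card_invg leqnn andbT; apply/subsetP => y.
by rewrite mem_invg => /H; rewrite invgK.
Qed.

Lemma disjP A B : reflect (forall y, y \in A -> y \notin B) [disjoint A & B].
Proof.
rewrite disjoints_subset; apply: (iffP subsetP) => H y /H; by rewrite inE.
Qed.

Definition Pp A : {poly int} :=
  \sum_(S : {set gT} | (S \subset A) && (S^-1 == S)%g) 'X^#|S|.

Definition invs A := [set y in A | (y^-1 == y)%g].

Lemma Pp_split A B b : invc A -> invc B -> B \subset A -> b \in B ->
  (forall S, invc S -> forall y, y \in B -> y \in S -> B \subset S) ->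
  Pp A = (1 + 'X^#|B|) * Pp (A :\: B).
Proof.
move=> hA hB BA bB hS.
rewrite /Pp (bigID (fun S => B \subset S)) /= addrC mulrDl mul1r; congr (_ + _).
  apply: eq_bigl => S; rewrite subsetD.
  case iS: (S^-1 == S)%g; rewrite ?andbF ?andbT //; congr (_ && _).
  apply/idP/idP.
    move=> nBS; apply/disjP => y yS; apply/negP => yB.
    by rewrite (hS S (elimT (invP S) iS) y yB yS) in nBS.
  move/disjP => D; apply/negP => BS.
  by move: (D b (subsetP BS b bB)); rewrite bB.
rewrite big_distrr /= (reindex_onto (fun T => B :|: T) (fun S => S :\: B)) /=;
  last first.
  move=> S /andP[_ BS]; apply/setP=> y; rewrite !inE.
  by case yB: (y \in B) => //=; rewrite (subsetP BS).
rewrite (eq_bigl (fun T => (T \subset A :\: B) && (T^-1 == T)%g)).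
  apply: eq_bigr => T /andP[TAB _]; rewrite -exprD cardsU.
  move: TAB; rewrite subsetD => /andP[_ dTB].
  by rewrite disjoint_setI0 ?cards0 ?subn0 // disjoint_sym.
move=> T; apply/idP/idP.
  case/andP => /andP[/andP[BTA /invP iBT] _] /eqP E.
  have TAB : T \subset A :\: B by rewrite -E setSD.
  rewrite TAB /=; apply/invP => y yT.
  have : y \in (B :|: T) :\: B by rewrite E.
  rewrite inE => /andP[yB _].
  have := iBT y; rewrite !inE yT orbT => /(_ isT) /orP[yiB|//].
  by move: (hB _ yiB); rewrite invgK (negbTE yB).
case/andP => TAB /invP iT; move: TAB; rewrite subsetD => /andP[TA dTB].
rewrite subUset BA TA subsetUl /=; apply/andP; split.
  rewrite andbT; apply/invP => y; rewrite !inE => /orP[/hB -> | /iT ->] //; exact: orbT.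
apply/eqP/setP => y; rewrite !inE; case yB: (y \in B) => //=.
by apply/esym/negP => yT; move/disjP: dTB => /(_ y yT); rewrite yB.
Qed.

Lemma Pp0 : Pp set0 = 1.
Proof.
rewrite /Pp (big_pred1 set0) ?cards0 ?expr0 // => S; rewrite subset0.
case: (S =P set0) => [->|/eqP nS]; last by rewrite /= (negbTE nS).
rewrite [pred1 _ _]eqxx andTb; apply/invP => y; by rewrite inE.
Qed.

Lemma Pp_formula A : invc A ->
  Pp A = (1 + 'X) ^+ #|invs A| * (1 + 'X ^+ 2) ^+ ((#|A| - #|invs A|)./2).
Proof.
have [n leAn] := ubnP #|A|; elim: n A leAn => // n IH A leAn hA.
case: (set_0Vmem A) => [-> | [x xA]].
  rewrite Pp0; have -> : invs set0 = set0 by apply/setP => y; rewrite !inE.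
  by rewrite cards0 expr0 mul1r.
case: (eqVneq x^-1 x)%g => xi.
- have hx : invc [set x] by move=> y; rewrite !inE => /eqP ->; rewrite xi.
  rewrite (@Pp_split A [set x] x) //; first last.
  + by move=> S _ y; rewrite inE => /eqP -> xS; rewrite sub1set.
  + by rewrite inE.
  + by rewrite sub1set.
  have hA' : invc (A :\ x).
    move=> y; rewrite !inE => /andP[yx yA]; rewrite hA // andbT.
    by apply: contra yx => /eqP E; rewrite -[y]invgK E xi.
  have Ei : invs (A :\ x) = invs A :\ x by apply/setP => y; rewrite !inE andbA.
  have xI : x \in invs A by rewrite /invs inE xA xi eqxx.
  rewrite cards1 IH //; last by move: leAn; rewrite (cardsD1 x A) xA.
  rewrite Ei (cardsD1 x A) (cardsD1 x (invs A)) xA xI /= subSS expr1 add1n. 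
  by rewrite [(1 + 'X) ^+ _.+1]exprS mulrA.
- set B := [set x; x^-1]%g.
  have hB : invc B.
    by move=> y; rewrite !inE => /orP[]/eqP ->; rewrite ?invgK eqxx ?orbT.
  have BA : B \subset A.
    by apply/subsetP => y; rewrite !inE => /orP[]/eqP ->; rewrite ?hA.
  rewrite (@Pp_split A B x) //; first last.
  + move=> S iS y yB yS; apply/subsetP => z; rewrite !inE.
    have [xS xiS] : x \in S /\ (x^-1)%g \in S.
      move: yB; rewrite !inE => /orP[]/eqP E; subst y.
        by split; last exact: iS.
      by split; first by rewrite -[x]invgK; exact: iS.
    by case/orP => /eqP ->.
  + by rewrite !inE eqxx.
  have Ei : invs (A :\: B) = invs A.
    apply/setP => y; rewrite !inE; case yi: (y^-1 == y)%g; rewrite ?andbF //.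
    rewrite !andbT; case: (eqVneq y x) => [E|_]; first by subst y; rewrite yi in xi.
    case: (eqVneq y x^-1)%g => [E|_] //; subst y.
    by move: yi; rewrite invgK eq_sym (negbTE xi).
  have cB : #|B| = 2%N by rewrite cards2 eq_sym xi.
  have cA : #|A :\: B| = (#|A| - 2)%N by rewrite cardsD (setIidPr BA) cB.
  have le2 : (2 <= #|A|)%N by rewrite -cB subset_leq_card.
  have iA : (#|invs A| <= #|A :\: B|)%N.
    by rewrite -Ei subset_leq_card //; apply/subsetP => y; rewrite inE => /andP[].
  rewrite IH //; first last.
  + move=> y; rewrite !in_setD => /andP[yB yA]; rewrite hA // andbT.
    by apply: contra yB => yiB; have := hB _ yiB; rewrite invgK.
  + by move: leAn; rewrite cA; lia.
  rewrite Ei cB.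
  have -> : (#|A| - #|invs A| = (#|A :\: B| - #|invs A|).+2)%N by rewrite cA in iA *; lia.
  by rewrite [X in _ = _ * X]exprS mulrCA.
Qed.

Lemma Pp_group (K : {group gT}) :
  Pp (K :\ 1%g) = (1 + 'X ^+ 2) ^+ ((#|K| - #|O2 K| - 1)./2) * (1 + 'X) ^+ #|O2 K|.
Proof.
have hK : invc (K :\ 1%g).
  move=> y; rewrite !inE => /andP[y1 yK]; by rewrite invg_eq1 y1 groupV.
have -> : O2 K = invs (K :\ 1%g).
  apply/setP => y; rewrite !inE expgS expg1 -eq_invg_mul eq_sym.
  by case: (y \in K); case: (y == y^-1)%g; rewrite /= ?andbT ?andbF.
rewrite Pp_formula // mulrC; congr (_ * _ ^+ _).
by rewrite (cardsD1 1%g K) group1 /= subnAC add1n subn1.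
Qed.

Definition gcond (L : {set gT}) S :=
  [&& S \subset L, S^-1 == S, <<S>> == L, 1 \notin S & S != set0]%g.
Definition Qp L : {poly int} := \sum_(S | gcond L S) 'X^#|S|.

Lemma claim2 (K : {group gT}) :
  Pp (K :\ 1%g) - 1 = \sum_(L : {group gT} | L \subset K) Qp L.
Proof.
rewrite /Pp (bigD1 set0) /=; last by rewrite sub0set; apply/invP => y; by rewrite inE.
rewrite cards0 expr0 addrC addrK.
rewrite (partition_big (fun S => <<S>>%G) (fun L : {group gT} => L \subset K)) /=.
  apply: eq_bigr => L LK; apply: eq_bigl => S; rewrite /gcond.
  have -> : (<<S>>%G == L) = (<<S>> == L :> {set gT})%g by [].
  case E: (<<S>> == L :> {set gT})%g; rewrite ?andbF //=.
  have SL : S \subset L by rewrite -(eqP E) subset_gen.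
  rewrite subsetD1 SL (subset_trans SL LK) /= andbT.
  by case: (1 \in S)%g; case: (S^-1 == S)%g; case: (S == set0).
move=> S /andP[/andP[SK _] _]; rewrite gen_subG.
by apply: subset_trans SK _; apply: subsetDl.
Qed.

Lemma claim3 (G : {group gT}) mu : is_subgroup_mobius G mu ->
  \sum_(K : {group gT} | K \subset G) (mu K)%:P * (Pp (K :\ 1%g) - 1) = Qp G.
Proof.
move=> hmu.
under eq_bigr => K _ do rewrite claim2 big_distrr.
rewrite /= (exchange_big_dep (fun L : {group gT} => L \subset G)) /=; last first.
  by move=> K L KG LK; exact: subset_trans LK KG.
under eq_bigr => L LG do rewrite -big_distrl /= -rmorph_sum.
rewrite (bigD1 G) //= [X in _ + X]big1 ?addr0.
  rewrite (eq_bigl (fun K : {group gT} => (G \subset K) && (K \subset G))).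
    by rewrite hmu // eqxx polyC1 mul1r.
  by move=> K; rewrite andbC.
move=> L /andP[LG LnG].
rewrite (eq_bigl (fun K : {group gT} => (L \subset K) && (K \subset G))).
  by rewrite hmu // (negbTE LnG) polyC0 mul0r.
by move=> K; rewrite andbC.
Qed.

Lemma a_k_abelian (G : {group gT}) k : abelian G -> a_k G k = #|cayley_sets G k|.
Proof.
move=> abG; rewrite /a_k card_in_imset // => S T.
rewrite !inE => /and5P[SG _ _ _ _] /and5P[TG _ _ _ _] E.
have : S \in orbit 'Js G T by rewrite -E orbit_refl.
case/imsetP => g gG -> /=.
apply/normP; apply: (subsetP (cent_sub T)); apply: (subsetP (centS TG)).
exact: (subsetP abG g gG).
Qed.

Lemma Psi_Q (G : {group gT}) : abelian G -> Psi G = Qp G.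
Proof.
move=> abG.
transitivity (\sum_(1 <= k < #|G|) \sum_(S in cayley_sets G k) 'X^#|S| : {poly int}).
  apply: eq_bigr => k _; rewrite a_k_abelian // scaler_nat -sumr_const.
  by apply: eq_bigr => S; rewrite inE => /and5P[_ _ _ _ /eqP->].
rewrite big_nat_cond (exchange_big_dep (gcond G)) /=; last first.
  move=> k S /andP[/andP[k1 _] _]; rewrite inE => /and5P[SG iS gS n1 /eqP Sk].
  by rewrite /gcond SG iS gS n1 -card_gt0 Sk.
apply: eq_bigr => S /and5P[SG iS gS n1 ne].
have mlt : (#|S| < #|G|)%N.
  have : S \subset G :\ 1%g by rewrite subsetD1 SG n1.
  by move/subset_leq_card; rewrite (cardsD1 1%g G) group1 add1n ltnS.
rewrite big_geq_mkord (big_pred1 (Ordinal mlt)) // => k.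
rewrite inE SG iS gS n1 /= -val_eqE /= andbT eq_sym.
case: eqP => [->|_]; rewrite ?andbF // mlt andbT.
by rewrite card_gt0 ne.
Qed.

End Aux.

Theorem theorem3p1 (gT : finGroupType) (G : {group gT})
    (mu : {group gT} -> int) :
  abelian G ->
  is_subgroup_mobius G mu ->
  Psi G = \sum_(K : {group gT} | K \subset G)
            (mu K)%:P * ((1 + 'X ^+ 2) ^+ ((#|K| - #|O2 K| - 1)./2)
                          * (1 + 'X) ^+ #|O2 K| - 1)
  /\ (E_count G)%:R = (Psi G).[1]
  /\ (E_count G)%:R = \sum_(K : {group gT} | K \subset G)
            mu K * (2 ^+ ((#|K| + #|O2 K| - 1)./2) - 1) :> int.
Proof.
move=> abG hmu.
have P1 : Psi G = \sum_(K : {group gT} | K \subset G)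
            (mu K)%:P * ((1 + 'X ^+ 2) ^+ ((#|K| - #|O2 K| - 1)./2)
                          * (1 + 'X) ^+ #|O2 K| - 1).
  rewrite Psi_Q // -(@claim3 _ G mu hmu); apply: eq_bigr => K _; by rewrite Pp_group.
have P2 : (E_count G)%:R = (Psi G).[1] :> int.
  rewrite /Psi horner_sum /E_count natr_sum; apply: eq_bigr => k _.
  by rewrite hornerZ hornerXn expr1n mulr1.
split => //; split => //.
rewrite P2 P1 horner_sum; apply: eq_bigr => K _.
rewrite !hornerE /= expr1n.
have -> : (1 + 1 : int) = 2 by [].
rewrite -exprD; congr (_ * (_ ^+ _ - _)).
have oK : (#|O2 K| < #|K|)%N.
  apply: proper_card; rewrite properE; apply/andP; split.
    by apply/subsetP => y; rewrite inE => /andP[].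
  apply/negP => /subsetP /(_ 1%g (group1 K)).
by rewrite /O2 inE eqxx !andbF.
have -> : (#|K| + #|O2 K| - 1 = (#|K| - #|O2 K| - 1) + (#|O2 K|).*2)%N.
  rewrite -muln2; move: oK; set k := #|K|; set o := #|O2 K|.
  lia.
by rewrite halfD odd_double andbF doubleK.
Qed.
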